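(* Let $A\in\mathbb{C}^{n\times n}$ and let $X\in\mathbb{C}^{n\times n}$ be a matrix whose $j$-th column $x^{(j)}$ is an eigenvector of $A$ with $\|x^{(j)}\|_2=1$, for $j=1,\dots,n$. Suppose there is $k>0$ with $|X_{ij}|\le k/n^2$ for all $i\ne j$, and $n^3-3kn^2-3k^2>0$. Then $X$ is invertible and $$\kappa(X)=\|X\|_2\|X^{-1}\|_2\le\frac{n^3+3kn^2+k^2}{n^3-3kn^2-3k^2}.$$
   Context: $\kappa(X)=\|X\|_2\|X^{-1}\|_2$ is the spectral condition number. The hypothesis $|X_{ij}|\le k/n^2$ ($i\ne j$) is the situation produced by a matrix whose diagonal entries are pairwise separated by at least a constant times $n^2$ and whose off-diagonal row sums are bounded by a constant, with $x^{(j)}$ the unit eigenvector for the eigenvalue in the $j$-th Gershgorin disc. *)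

(* Defs.v *)
From HB Require Import structures.
From mathcomp Require Import all_boot all_order all_algebra.
From mathcomp Require Import classical_sets reals.
From mathcomp Require Import complex.
Set Implicit Arguments. Unset Strict Implicit. Unset Printing Implicit Defensive.
Import Order.TTheory GRing.Theory Num.Theory.
Local Open Scope ring_scope.
Local Open Scope classical_set_scope.

Definition cabs (R : realType) (z : R[i]) : R :=
  Num.sqrt (complex.Re z ^+ 2 + complex.Im z ^+ 2).

Definition vnorm2 (R : realType) (n : nat) (v : 'cV[R[i]]_n) : R :=
  Num.sqrt (\sum_(i < n) cabs (v i 0) ^+ 2).

Definition opnorm2 (R : realType) (n : nat) (X : 'M[R[i]]_n) : R :=
  sup [set vnorm2 (X *m v) | v in [set v : 'cV[R[i]]_n | vnorm2 v = 1]].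

Definition cond2 (R : realType) (n : nat) (X : 'M[R[i]]_n) : R :=
  opnorm2 X * opnorm2 (invmx X).

Definition is_eigenvector (R : realType) (n : nat) (A : 'M[R[i]]_n)
  (v : 'cV[R[i]]_n) : Prop :=
  v != 0 /\ exists lambda : R[i], A *m v = lambda *: v.

(* Main.v *)
Require Import Defs.
From HB Require Import structures.
From mathcomp Require Import all_boot all_order all_algebra.
From mathcomp Require Import classical_sets reals.
From mathcomp Require Import complex.
From mathcomp Require Import ring lra.
Import Order.TTheory GRing.Theory Num.Theory.
Local Open Scope ring_scope.

Set Implicit Arguments. Unset Strict Implicit.
Import Normc.
Lemma cabsE (R : realType) (z : R[i]) : cabs z = normc z.
Proof. by case: z. Qed.

Lemma normc_ge0 (R : realType) (z : R[i]) : 0 <= normc z.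
Proof. by case: z => a b; rewrite /= sqrtr_ge0. Qed.

Lemma sq_le (R : realType) (x y : R) : 0 <= x -> x <= y -> x ^+ 2 <= y ^+ 2.
Proof. move=> *; nra. Qed.

Lemma normc_sum (R : realType) n (P : pred 'I_n) (F : 'I_n -> R[i]) :
  normc (\sum_(i | P i) F i) <= \sum_(i | P i) normc (F i).
Proof.
elim/big_rec2: _ => [|i y z _ H]; first by rewrite normc0.
apply: le_trans (le_normcD _ _) _; exact: lerD.
Qed.

Lemma CS (R : realType) n (x y : 'I_n -> R) :
  (\sum_i x i * y i) ^+ 2 <= (\sum_i x i ^+ 2) * (\sum_i y i ^+ 2).
Proof.
set A := \sum_i x i ^+ 2; set B := \sum_i x i * y i; set C := \sum_i y i ^+ 2.
have H0 : 0 <= \sum_i (A * y i - B * x i) ^+ 2 by apply: sumr_ge0 => i _; exact: sqr_ge0.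
have E : \sum_i (A * y i - B * x i) ^+ 2 = A * (A * C - B ^+ 2).
  rewrite (eq_bigr (fun i => A^+2 * y i ^+ 2 - (2 * A * B) * (x i * y i) + B ^+ 2 * x i ^+ 2)); last by move=> i _; ring.
  rewrite big_split sumrB /= -!mulr_sumr -/A -/B -/C; ring.
have A0 : 0 <= A by apply: sumr_ge0 => i _; exact: sqr_ge0.
case: (eqVneq A 0) => [Az|Anz].
  have xz : forall i, x i = 0.
    move=> i; apply/eqP; rewrite -sqrf_eq0; apply/eqP.
    by apply: (psumr_eq0P (F := fun j => x j ^+ 2) (P := xpredT) _ Az) => // j _; exact: sqr_ge0.
  by rewrite /B big1 ?expr0n /= ?Az ?mul0r // => i _; rewrite xz mul0r.
have Ap : 0 < A by rewrite lt_def Anz A0.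
rewrite E in H0; rewrite -subr_ge0; move: H0; rewrite pmulr_rge0 //.
Qed.

Definition S {R : realType} {n} (v : 'cV[R[i]]_n) := \sum_i normc (v i 0) ^+ 2.

Lemma vnorm2E (R : realType) n (v : 'cV[R[i]]_n) : vnorm2 v = Num.sqrt (S v).
Proof. by rewrite /vnorm2 /S; congr Num.sqrt; apply: eq_bigr => i _; rewrite cabsE. Qed.

Lemma S_ge0 (R : realType) n (v : 'cV[R[i]]_n) : 0 <= S v.
Proof. by apply: sumr_ge0 => i _; exact: sqr_ge0. Qed.

Lemma pw (R : realType) (s p q t : R) : 0 < t -> 0 <= s -> 0 <= p -> 0 <= q ->
  s <= p + q -> s ^+ 2 <= (1 + t) * p ^+ 2 + (1 + t^-1) * q ^+ 2.
Proof.
move=> t0 s0 p0 q0 spq.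
have h1 := sq_le s0 spq.
have h2 : t^-1 * (t * p - q) ^+ 2 = t * p ^+ 2 - 2 * p * q + t^-1 * q ^+ 2.
  by field; rewrite gt_eqF.
have h3 : 0 <= t^-1 * (t * p - q) ^+ 2 by rewrite mulr_ge0 ?sqr_ge0 // invr_ge0 ltW.
nra.
Qed.

Lemma key (R : realType) n (X : 'M[R[i]]_n) (c t : R) :
  0 < t -> 0 <= c ->
  (forall j, \sum_i normc (X i j) ^+ 2 = 1) ->
  (forall i j, i != j -> normc (X i j) <= c) ->
  forall v : 'cV_n,
  S (X *m v) <= ((1 + t) + (1 + t^-1) * (c ^+ 2 * n%:R * n%:R)) * S v /\
  (1 - n%:R * c ^+ 2 - (1 + t^-1) * (c ^+ 2 * n%:R * n%:R)) * S v
     <= (1 + t) * S (X *m v).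
Proof.
move=> t0 c0 col off v.
set m : R := n%:R.
have Xv i : (X *m v) i 0 = X i i * v i 0 + \sum_(j | j != i) X i j * v j 0.
  by rewrite !mxE (bigD1 i).
have Eb i : normc (\sum_(j | j != i) X i j * v j 0) ^+ 2 <= c ^+ 2 * m * S v.
  have h1 : normc (\sum_(j | j != i) X i j * v j 0) <= c * \sum_j normc (v j 0).
    apply: le_trans (normc_sum _ _) _.
    apply: (@le_trans _ _ (\sum_(j | j != i) c * normc (v j 0))).
      apply: ler_sum => j ji; rewrite normcM; exact: (ler_wpM2r (normc_ge0 _) (off i j ltac:(by rewrite eq_sym))).
    rewrite mulr_sumr [X in _ <= X](bigD1 i) //=.
    by apply: ler_wpDl => //; rewrite mulr_ge0 ?normc_ge0.
  have h2 : (\sum_j normc (v j 0)) ^+ 2 <= m * S v.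
    have := CS (fun _ : 'I_n => 1 : R) (fun j => normc (v j 0)).
    have e1 : \sum_i (1:R) * normc (v i 0) = \sum_i normc (v i 0).
      by apply: eq_bigr => l _; rewrite mul1r.
    have e2 : \sum_(i < n) (1:R) ^+ 2 = m by rewrite expr1n sumr_const card_ord.
    by rewrite e1 e2.
  apply: le_trans (sq_le (normc_ge0 _) h1) _.
  rewrite exprMn -mulrA; exact: (ler_wpM2l (sqr_ge0 c) h2).
have Dg j : 1 - m * c ^+ 2 <= normc (X j j) ^+ 2 /\ normc (X j j) ^+ 2 <= 1.
  have := col j; rewrite (bigD1 j) //= => Hs.
  have hb : \sum_(i | i != j) normc (X i j) ^+ 2 <= m * c ^+ 2.
    apply: (@le_trans _ _ (\sum_(i | i != j) c ^+ 2)).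
      by apply: ler_sum => i ij; apply: sq_le; [exact: normc_ge0 | exact: off].
    rewrite (_ : m * c ^+ 2 = \sum_(i < n) c ^+ 2); last by rewrite sumr_const card_ord mulr_natl.
    by rewrite [X in _ <= X](bigD1 j) //=; apply: ler_wpDl => //; exact: sqr_ge0.
  have hp : 0 <= \sum_(i | i != j) normc (X i j) ^+ 2.
    by apply: sumr_ge0 => i _; exact: sqr_ge0.
  split; lra.
have SE := S_ge0 v; have SXE := S_ge0 (X *m v).
split.
  have U i : normc ((X *m v) i 0) ^+ 2 <= (1 + t) * normc (v i 0) ^+ 2
                                      + (1 + t^-1) * (c ^+ 2 * m * S v).
    apply: le_trans (pw t0 (normc_ge0 _) (normc_ge0 (X i i * v i 0))
      (normc_ge0 (\sum_(j | j != i) X i j * v j 0)) _) _.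
      by rewrite Xv; exact: le_normcD.
    have [_ d1] := Dg i.
    rewrite normcM exprMn; apply: lerD; last first.
      by apply: ler_wpM2l; [rewrite addr_ge0 // invr_ge0 ltW | exact: Eb].
    apply: ler_wpM2l; first by rewrite addr_ge0 // ltW.
    by rewrite -[X in _ <= X]mul1r; exact: (ler_wpM2r (sqr_ge0 _) d1).
  apply: le_trans (ler_sum _ (fun i _ => U i)) _.
  rewrite big_split /= -mulr_sumr sumr_const card_ord -mulr_natl -/m -/(S v).
  nra.
have L i : (1 - m * c ^+ 2) * normc (v i 0) ^+ 2 <= (1 + t) * normc ((X *m v) i 0) ^+ 2
                                      + (1 + t^-1) * (c ^+ 2 * m * S v).
  have [d0 _] := Dg i.
  apply: (@le_trans _ _ (normc (X i i * v i 0) ^+ 2)).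
    by rewrite normcM exprMn; exact: (ler_wpM2r (sqr_ge0 _) d0).
  apply: le_trans (pw t0 (normc_ge0 _) (normc_ge0 ((X *m v) i 0))
      (normc_ge0 (\sum_(j | j != i) X i j * v j 0)) _) _.
    rewrite (_ : X i i * v i 0 = (X *m v) i 0 + - \sum_(j | j != i) X i j * v j 0).
      by rewrite -(normcN (\sum_(j | j != i) X i j * v j 0)); exact: le_normcD.
    by rewrite Xv addrK.
  apply: lerD => //.
  by apply: ler_wpM2l; [rewrite addr_ge0 // invr_ge0 ltW | exact: Eb].
have HL : \sum_i (1 - m * c ^+ 2) * normc (v i 0) ^+ 2 <= \sum_i ((1 + t) * normc ((X *m v) i 0) ^+ 2
                                      + (1 + t^-1) * (c ^+ 2 * m * S v)).
  by apply: ler_sum => i _; exact: L.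
move: HL; rewrite big_split /= -!mulr_sumr sumr_const card_ord -mulr_natl -/m -/(S v) -/(S (X *m v)).
nra.
Qed.

Lemma S_vnorm (R : realType) n (v : 'cV[R[i]]_n) : vnorm2 v = 1 -> S v = 1.
Proof. by rewrite vnorm2E => h; rewrite -(sqr_sqrtr (S_ge0 v)) h expr1n. Qed.

Lemma opnorm_bound (R : realType) n (Y : 'M[R[i]]_n.+1) (B : R) :
  (forall v, S v = 1 -> S (Y *m v) <= B ^+ 2) -> 0 <= B -> 0 <= opnorm2 Y <= B.
Proof.
move=> H B0.
set E := [set vnorm2 (Y *m v) | v in [set v : 'cV[R[i]]_n.+1 | vnorm2 v = 1]]%classic.
have ub : ubound E B.
  move=> y [v /= hv <-]; rewrite vnorm2E.
  rewrite -(ger0_norm B0) -sqrtr_sqr ler_sqrt ?sqr_ge0 //.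
  exact: H (S_vnorm hv).
pose e : 'cV[R[i]]_n.+1 := \col_i (i == ord0)%:R.
have He : vnorm2 e = 1.
  rewrite vnorm2E /S (bigD1 ord0) //= big1 => [|i ineq].
    by rewrite mxE eqxx normc1 expr1n addr0 sqrtr1.
  by rewrite mxE (negbTE ineq) normc0 expr0n.
have Ee : E (vnorm2 (Y *m e)) by exists e.
apply/andP; split; last by apply: ge_sup => //; exists (vnorm2 (Y *m e)).
apply: le_trans (ub_le_sup _ Ee); first by rewrite vnorm2E sqrtr_ge0.
by exists B.
Qed.

Lemma sq_le_inv (R : realType) (x y : R) : 0 <= x -> 0 <= y -> x ^+ 2 <= y ^+ 2 -> x <= y.
Proof. move=> *; nra. Qed.

Lemma fin_ineq (R : realType) (a b : R) : 0 < a -> 0 <= b -> 0 < 1 - 3 * a - 3 * b ->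
  [/\ (1 + a) ^+ 3 <= (1 + 3 * a + b) ^+ 2,
      (1 - 3 * a - 3 * b) ^+ 2 <= 1 - b - a - a ^+ 2 &
      0 < 1 - b - a - a ^+ 2].
Proof.
move=> a0 b0 D0.
have a3 : a < 1 / 3 by lra.
have a2 : a ^+ 2 <= a / 3 by nra.
split.
- have h1 : (1 + 3 * a) ^+ 2 <= (1 + 3 * a + b) ^+ 2 by nra.
  have h2 : a ^+ 3 <= a ^+ 2 by rewrite exprS; nra.
  nra.
- nra.
- nra.
Qed.

Unset Implicit Arguments. Set Strict Implicit.
Theorem theorem3 (R : realType) (n : nat) (A X : 'M[R[i]]_n) (k : R) :
  (forall j : 'I_n, is_eigenvector A (col j X) /\ vnorm2 (col j X) = 1) ->
  0 < k ->
  (forall i j : 'I_n, i != j -> cabs (X i j) <= k / (n%:R ^+ 2)) ->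
  0 < n%:R ^+ 3 - 3 * k * n%:R ^+ 2 - 3 * k ^+ 2 ->
  X \in unitmx /\
  cond2 X <= (n%:R ^+ 3 + 3 * k * n%:R ^+ 2 + k ^+ 2)
             / (n%:R ^+ 3 - 3 * k * n%:R ^+ 2 - 3 * k ^+ 2).
Proof.
case: n A X => [|n] A X Heig k0 Hoff Hpos.
  by exfalso; move: Hpos; rewrite !expr0n /=; nra.
set m : R := n.+1%:R.
have m0 : 0 < m by rewrite ltr0Sn.
have m1 : 1 <= m by rewrite ler1n.
have hn : (1 + n%:R : R) != 0 by rewrite nat1r pnatr_eq0.
have kn : k != 0 by rewrite gt_eqF.
have col j : \sum_i normc (X i j) ^+ 2 = 1.
  have := S_vnorm (Heig j).2; rewrite /S => <-.
  by apply: eq_bigr => i _; rewrite mxE.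
have off i j : i != j -> normc (X i j) <= k / m ^+ 2.
  by move=> ij; rewrite -cabsE; exact: Hoff.
set a := k / m.
have a0 : 0 < a by rewrite divr_gt0.
set b := a ^+ 2 / m.
have b0 : 0 <= b by rewrite divr_ge0 ?sqr_ge0 // ltW.
have bm : b * m = a ^+ 2 by rewrite /b mulfVK // gt_eqF.
have ba : b <= a ^+ 2 by nra.
have eD : m ^+ 3 - 3 * k * m ^+ 2 - 3 * k ^+ 2 = m ^+ 3 * (1 - 3 * a - 3 * b).
  by rewrite /b /a; field; rewrite ?hn ?kn ?(gt_eqF m0) ?(gt_eqF a0) //.
have hD : 0 < 1 - 3 * a - 3 * b.
  by move: Hpos; rewrite -/m eD pmulr_rgt0 // exprn_gt0.
have c0 : 0 <= k / m ^+ 2 by rewrite divr_ge0 ?ltW ?exprn_gt0.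
have KY := key a0 c0 col off.
have e1 : k / m ^+ 2 * (k / m ^+ 2) * m * m = a ^+ 2.
  by rewrite /a; field; rewrite ?hn ?kn ?(gt_eqF m0) ?(gt_eqF a0) //.
have e2 : m * (k / m ^+ 2 * (k / m ^+ 2)) = b.
  by rewrite /b /a; field; rewrite ?hn ?kn ?(gt_eqF m0) ?(gt_eqF a0) //.
have e3 : 1 + a + (1 + a^-1) * a ^+ 2 = (1 + a) ^+ 2.
  by field; rewrite ?hn ?kn ?(gt_eqF m0) ?(gt_eqF a0) //.
have e4 : 1 - b - (1 + a^-1) * a ^+ 2 = 1 - b - a - a ^+ 2.
  by field; rewrite ?hn ?kn ?(gt_eqF m0) ?(gt_eqF a0) //.
set L0 := 1 - b - a - a ^+ 2.
have [hN hDL L0p] := fin_ineq a0 b0 hD.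
have Up v : S (X *m v) <= (1 + a) ^+ 2 * S v.
  by have [h _] := KY v; move: h; rewrite expr2 e1 e3.
have Lo v : L0 * S v <= (1 + a) * S (X *m v).
  by have [_ h] := KY v; move: h; rewrite expr2 e1 e2 e4.
have S0 : S (0 : 'cV[R[i]]_n.+1) = 0.
  by rewrite /S big1 // => i _; rewrite mxE normc0 expr0n.
have Xu : X \in unitmx.
  rewrite unitmxE unitfE -det_tr; apply/det0P => -[w wn0 hw].
  have hX : X *m w^T = 0 by rewrite -(trmxK (X *m w^T)) trmx_mul trmxK hw trmx0.
  have Sw : S w^T = 0.
    have := Lo w^T; rewrite hX S0 mulr0 => h.
    apply/eqP; rewrite eq_le S_ge0 andbT.
    by rewrite -(pmulr_rle0 _ L0p).
  move/eqP: wn0; apply; apply/rowP => i; rewrite mxE.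
  have := psumr_eq0P (F := fun i => normc (w^T i 0) ^+ 2) (P := xpredT)
     (fun i _ => sqr_ge0 _) Sw => /(_ i isT).
  by rewrite mxE => /eqP; rewrite sqrf_eq0 => /eqP /eq0_normc.
split => //.
have HX v : S v = 1 -> S (X *m v) <= (1 + a) ^+ 2.
  by move=> hv; have := Up v; rewrite hv mulr1.
have /andP [n1 nX] := opnorm_bound HX ltac:(by rewrite addr_ge0 // ltW).
set B2 := Num.sqrt ((1 + a) / L0).
have B2ge : 0 <= B2 by exact: sqrtr_ge0.
have Hinv v : S v = 1 -> S (invmx X *m v) <= B2 ^+ 2.
  move=> hv; rewrite /B2 sqr_sqrtr; last by apply: divr_ge0; [apply: addr_ge0; [exact: ler01 | exact: ltW] | exact: ltW].
  rewrite ler_pdivlMr //.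
  by have := Lo (invmx X *m v); rewrite mulKVmx // hv mulr1 mulrC.
have /andP [n2 nI] := opnorm_bound Hinv B2ge.
rewrite /cond2.
apply: le_trans (ler_pM n1 n2 nX nI) _.
have eT : (m ^+ 3 + 3 * k * m ^+ 2 + k ^+ 2) / (m ^+ 3 - 3 * k * m ^+ 2 - 3 * k ^+ 2)
   = (1 + 3 * a + b) / (1 - 3 * a - 3 * b).
  rewrite eD /b /a; field.
  rewrite hn /= (_ : _ - 3 * k ^+ 2 = m ^+ 3 - 3 * k * m ^+ 2 - 3 * k ^+ 2).
    by rewrite (gt_eqF Hpos).
  by rewrite /m -nat1r; ring.
rewrite -/m eT.
set T := (1 + 3 * a + b) / (1 - 3 * a - 3 * b).
have T0 : 0 <= T.
  apply: divr_ge0; last exact: ltW.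
  apply: addr_ge0 => //; apply: addr_ge0 => //; apply: mulr_ge0 => //; exact: ltW.
have x0 : 0 <= (1 + a) * B2 by rewrite mulr_ge0 // addr_ge0 // ltW.
apply: sq_le_inv => //.
rewrite exprMn /B2 sqr_sqrtr; last by apply: divr_ge0; [apply: addr_ge0; [exact: ler01 | exact: ltW] | exact: ltW].
rewrite /T expr_div_n.
have D2 : 0 < (1 - 3 * a - 3 * b) ^+ 2 by rewrite exprn_gt0.
rewrite mulrA (_ : (1 + a) ^+ 2 * (1 + a) = (1 + a) ^+ 3); last by ring.
apply: (@le_trans _ _ ((1 + a) ^+ 3 / (1 - 3 * a - 3 * b) ^+ 2)).
  apply: ler_wpM2l; first by rewrite exprn_ge0 // addr_ge0 // ltW.
  by rewrite lef_pV2 ?posrE.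
by apply: ler_wpM2r => //; rewrite invr_ge0 ltW.
Qed.
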